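(* Let $x<y$ be real numbers. For every convex function $f:[x,y]\to\mathbb{R}$ the following inequalities are satisfied: $$\frac{3}{(y-x)^2}\int_x^y\int_x^y f\left(\frac{s+t}{2}\right)ds\,dt\leq\frac{2}{y-x}\int_x^y f(t)\,dt+f\left(\frac{x+y}{2}\right)$$ and $$\frac{4}{y-x}\int_x^y f(t)\,dt\leq\frac{3}{(y-x)^2}\int_x^y\int_x^y f\left(\frac{s+t}{2}\right)ds\,dt+\frac{f(x)+f(y)}{2}.$$ *)

(* Defs.v *)
From Stdlib Require Import Reals.
From Coquelicot Require Import Coquelicot.
Open Scope R_scope.

(* f is convex on the closed interval [x, y]. Only the values of f on [x,y]
   matter for the statement. *)
Definition convex_on (x y : R) (f : R -> R) : Prop :=
  forall a b l : R, x <= a <= y -> x <= b <= y -> 0 <= l <= 1 ->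
    f (l * a + (1 - l) * b) <= l * f a + (1 - l) * f b.

Definition double_mid_int (x y : R) (f : R -> R) : R :=
  RInt (fun t => RInt (fun s => f ((s + t) / 2)) x y) x y.

(* Main.v *)
Require Import Defs.
From Stdlib Require Import Reals Lra Psatz Classical.
From Coquelicot Require Import Coquelicot.
Open Scope R_scope.

Lemma cvx3 x y f a b c : convex_on x y f -> x <= a -> a <= b -> b <= c -> c <= y -> a < c ->
  f b * (c - a) <= f a * (c - b) + f c * (b - a).
Proof.
intros Hf H1 H2 H3 H4 H5.
set (l := (c - b) / (c - a)).
assert (Hl : 0 <= l <= 1).
{ unfold l; split. apply Rmult_le_pos; [lra| left; apply Rinv_0_lt_compat; lra].
  apply (Rmult_le_reg_r (c - a)); [lra|]. unfold Rdiv; rewrite Rmult_assoc, Rinv_l; lra. }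
assert (E : l * a + (1 - l) * c = b) by (unfold l; field; lra).
pose proof (Hf a c l ltac:(lra) ltac:(lra) Hl) as H. rewrite E in H.
assert (E1 : l * (c - a) = c - b) by (unfold l; field; lra).
assert (E2 : (1 - l) * (c - a) = b - a) by (unfold l; field; lra).
apply Rmult_le_compat_r with (r := c - a) in H; [|lra].
nra.
Qed.


Lemma left_lim x y f : x < y -> convex_on x y f ->
  exists l, forall eps, 0 < eps -> exists d, 0 < d /\
    forall u, x < u < x + d -> Rabs (f u - l) < eps.
Proof.
intros Hxy Hf.
set (m := (x + y) / 2).
assert (Hm1 : x < m) by (unfold m; lra).
assert (Hm2 : m < y) by (unfold m; lra).
clearbody m.
set (S := fun u => (f m - f u) / (m - u)).
set (E := fun r => exists u, x < u < m /\ r = - S u).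
assert (Hb : bound E).
{ unfold bound, is_upper_bound. exists (- S x). intros r [u [Hu ->]]. apply Ropp_le_contravar.
  unfold S. pose proof (cvx3 x y f x u m Hf ltac:(lra) ltac:(lra) ltac:(lra) ltac:(lra) ltac:(lra)).
  unfold Rdiv. apply (Rmult_le_reg_r ((m - x) * (m - u))). apply Rmult_lt_0_compat; lra.
  replace ((f m - f x) * / (m - x) * ((m - x) * (m - u))) with ((f m - f x) * (m - u)) by (field; lra).
  replace ((f m - f u) * / (m - u) * ((m - x) * (m - u))) with ((f m - f u) * (m - x)) by (field; lra).
  nra. }
assert (Hne : exists r, E r).
{ exists (- S ((x + m) / 2)). exists ((x + m)/2). split; [lra | reflexivity]. }
destruct (completeness E Hb Hne) as [s' [Hub Hlub]].
set (s := - s').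
assert (Hmono : forall u v, x < u -> u <= v -> v < m -> S u <= S v).
{ intros u v H1 H2 H3. destruct (Req_dec u v) as [->|Hne']; [lra|].
  pose proof (cvx3 x y f u v m Hf ltac:(lra) ltac:(lra) ltac:(lra) ltac:(lra) ltac:(lra)).
  unfold S, Rdiv. apply (Rmult_le_reg_r ((m - u) * (m - v))). apply Rmult_lt_0_compat; lra.
  replace ((f m - f u) * / (m - u) * ((m - u) * (m - v))) with ((f m - f u) * (m - v)) by (field; lra).
  replace ((f m - f v) * / (m - v) * ((m - u) * (m - v))) with ((f m - f v) * (m - u)) by (field; lra).
  nra. }
assert (Hlow : forall u, x < u < m -> s <= S u).
{ intros u Hu. unfold s. assert (- S u <= s') by (apply Hub; exists u; split; auto). lra. }
exists (f m - (m - x) * s).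
intros eps Heps.
set (e1 := Rmin 1 (eps / (2 * (m - x)))).
assert (He1 : 0 < e1).
{ unfold e1. apply Rmin_pos; [lra|]. apply Rdiv_lt_0_compat; [lra|lra]. }
assert (He1' : e1 * (m - x) <= eps / 2).
{ unfold e1. assert (Rmin 1 (eps / (2 * (m - x))) <= eps / (2 * (m - x))) by apply Rmin_r.
  apply Rmult_le_compat_r with (r := m - x) in H; [|lra].
  replace (eps / (2 * (m - x)) * (m - x)) with (eps / 2) in H by (field; lra). lra. }
assert (He1'' : e1 <= 1) by apply Rmin_l.
assert (Hu0 : exists u0, x < u0 < m /\ S u0 < s + e1).
{ apply NNPP. intro Hn.
  assert (Hup : is_upper_bound E (s' - e1)).
  unfold is_upper_bound.
  { intros r [u [Hu ->]]. destruct (Rle_dec (- S u) (s' - e1)) as [h|h]; [exact h|].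
    exfalso; apply Hn. exists u. split; [exact Hu| unfold s; lra]. }
  apply Hlub in Hup. lra. }
destruct Hu0 as [u0 [Hu0 Hs0]].
set (K := Rabs s + 1).
assert (HK : 0 < K) by (unfold K; pose proof (Rabs_pos s); lra).
exists (Rmin (u0 - x) (eps / (2 * K))). split.
{ apply Rmin_pos; [lra| apply Rdiv_lt_0_compat; lra]. }
intros u Hu.
assert (Hd1 : Rmin (u0 - x) (eps / (2 * K)) <= u0 - x) by apply Rmin_l.
assert (Hd2 : Rmin (u0 - x) (eps / (2 * K)) <= eps / (2 * K)) by apply Rmin_r.
assert (Hux : x < u < u0) by lra.
assert (HS1 : s <= S u) by (apply Hlow; lra).
assert (HS2 : S u <= S u0) by (apply Hmono; lra).
assert (Hfu : f u = f m - (m - u) * S u) by (unfold S; field; lra).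
rewrite Hfu.
replace (f m - (m - u) * S u - (f m - (m - x) * s)) with ((m - x) * (s - S u) + (u - x) * S u) by ring.
eapply Rle_lt_trans; [apply Rabs_triang|].
rewrite !Rabs_mult, (Rabs_pos_eq (m - x)), (Rabs_pos_eq (u - x)) by (lra).
assert (A1 : Rabs (s - S u) <= e1) by (apply Rabs_le; lra).
assert (A2 : Rabs (S u) <= K).
{ unfold K. apply Rabs_le. pose proof (Rle_abs (- s)) as Q1; rewrite Rabs_Ropp in Q1.
  pose proof (Rle_abs s). lra. }
assert (A3 : (u - x) * K < eps / 2).
{ apply Rlt_le_trans with ((eps / (2 * K)) * K). apply Rmult_lt_compat_r; lra.
  right; field; lra. }
assert ((m - x) * Rabs (s - S u) <= (m - x) * e1) by (apply Rmult_le_compat_l; [lra|exact A1]).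
assert ((u - x) * Rabs (S u) <= (u - x) * K) by (apply Rmult_le_compat_l; [lra|exact A2]).
lra.
Qed.


Lemma le_div D p q : 0 < q -> D * q <= p -> D <= p / q.
Proof. intros Hq H. apply (Rmult_le_reg_r q); [lra|]. unfold Rdiv; rewrite Rmult_assoc, Rinv_l; lra. Qed.
Lemma ge_div D p q : 0 < q -> p <= D * q -> p / q <= D.
Proof. intros Hq H. apply (Rmult_le_reg_r q); [lra|]. unfold Rdiv; rewrite Rmult_assoc, Rinv_l; lra. Qed.

Lemma refl_convex x y f : convex_on x y f -> convex_on x y (fun u => f (x + y - u)).
Proof.
intros Hf a b l Ha Hb Hl.
replace (x + y - (l * a + (1 - l) * b)) with (l * (x + y - a) + (1 - l) * (x + y - b)) by ring.
apply Hf; lra.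
Qed.

Lemma right_lim x y f : x < y -> convex_on x y f ->
  exists l, forall eps, 0 < eps -> exists d, 0 < d /\
    forall u, y - d < u < y -> Rabs (f u - l) < eps.
Proof.
intros Hxy Hf. destruct (left_lim x y _ Hxy (refl_convex x y f Hf)) as [l Hl].
exists l. intros eps He. destruct (Hl eps He) as [d [Hd H]]. exists d; split; auto.
intros u Hu. specialize (H (x + y - u) ltac:(lra)). simpl in H.
replace (x + y - (x + y - u)) with u in H by ring. exact H.
Qed.

Lemma slope_bound x y f c u : convex_on x y f -> x < c < y -> x < u < y ->
  Rabs (f u - f c) <= (Rabs ((f y - f c) / (y - c)) + Rabs ((f c - f x) / (c - x))) * Rabs (u - c).
Proof.
intros Hf Hc Hu.
set (A := (f y - f c) / (y - c)). set (B := (f c - f x) / (c - x)).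
destruct (Rtotal_order u c) as [Hlt|[Heq|Hgt]].
- pose proof (cvx3 x y f x u c Hf ltac:(lra) ltac:(lra) ltac:(lra) ltac:(lra) ltac:(lra)) as H1.
  pose proof (cvx3 x y f u c y Hf ltac:(lra) ltac:(lra) ltac:(lra) ltac:(lra) ltac:(lra)) as H2.
  assert (E1 : (f u - f c) * (c - x) <= (f x - f c) * (c - u)) by nra.
  assert (E2 : (f c - f y) * (c - u) <= (f u - f c) * (y - c)) by nra.
  apply le_div in E1; [|lra]. apply ge_div in E2; [|lra].
  assert (Ex : (f x - f c) * (c - u) / (c - x) = - B * (c - u)) by (unfold B; field; lra).
  assert (Ey : (f c - f y) * (c - u) / (y - c) = - A * (c - u)) by (unfold A; field; lra).
  rewrite Ex in E1. rewrite Ey in E2.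
  rewrite (Rabs_left (u - c)) by lra.
  pose proof (Rle_abs A). pose proof (Rle_abs (-A)). pose proof (Rle_abs B). pose proof (Rle_abs (-B)).
  rewrite Rabs_Ropp in *.
  apply Rabs_le. split; nra.
- subst. rewrite !Rminus_diag, Rabs_R0, Rmult_0_r. lra.
- pose proof (cvx3 x y f c u y Hf ltac:(lra) ltac:(lra) ltac:(lra) ltac:(lra) ltac:(lra)) as H1.
  pose proof (cvx3 x y f x c u Hf ltac:(lra) ltac:(lra) ltac:(lra) ltac:(lra) ltac:(lra)) as H2.
  assert (E1 : (f u - f c) * (y - c) <= (f y - f c) * (u - c)) by nra.
  assert (E2 : (f c - f x) * (u - c) <= (f u - f c) * (c - x)) by nra.
  apply le_div in E1; [|lra]. apply ge_div in E2; [|lra].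
  assert (Ex : (f y - f c) * (u - c) / (y - c) = A * (u - c)) by (unfold A; field; lra).
  assert (Ey : (f c - f x) * (u - c) / (c - x) = B * (u - c)) by (unfold B; field; lra).
  rewrite Ex in E1. rewrite Ey in E2.
  rewrite (Rabs_right (u - c)) by lra.
  pose proof (Rle_abs A). pose proof (Rle_abs (-A)). pose proof (Rle_abs B). pose proof (Rle_abs (-B)).
  rewrite Rabs_Ropp in *.
  apply Rabs_le. split; nra.
Qed.


Lemma cont_eps g z : (forall eps, 0 < eps -> exists d, 0 < d /\
   forall u, Rabs (u - z) < d -> Rabs (g u - g z) < eps) -> continuous g z.
Proof.
intros H. apply continuity_pt_filterlim. unfold continuity_pt, continue_in, limit1_in, limit_in.
intros eps He; destruct (H eps He) as [d [Hd H']]; exists d; split; auto.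
intros u [_ Hu]. simpl in *. unfold R_dist in *. apply H'; auto.
Qed.

Lemma ext_cont x y f : x < y -> convex_on x y f ->
  exists g, (forall u, x < u < y -> g u = f u) /\ (forall z, continuous g z).
Proof.
intros Hxy Hf.
destruct (left_lim x y f Hxy Hf) as [lx Hlx].
destruct (right_lim x y f Hxy Hf) as [ly Hly].
set (g := fun u => if Rle_dec u x then lx else if Rle_dec y u then ly else f u).
assert (G1 : forall u, u <= x -> g u = lx).
{ intros u Hu; unfold g; destruct (Rle_dec u x); [reflexivity| lra]. }
assert (G2 : forall u, x < u < y -> g u = f u).
{ intros u Hu; unfold g; destruct (Rle_dec u x); [lra|]; destruct (Rle_dec y u); [lra|reflexivity]. }
assert (G3 : forall u, y <= u -> g u = ly).
{ intros u Hu; unfold g; destruct (Rle_dec u x); [lra|]; destruct (Rle_dec y u); [reflexivity|lra]. }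
exists g; split; [exact G2|].
intros z; apply cont_eps; intros eps He.
destruct (Rtotal_order z x) as [Hz|[Hz|Hz]].
- exists (x - z); split; [lra|]. intros u Hu. apply Rabs_def2 in Hu.
  rewrite G1, G1 by lra. rewrite Rminus_diag, Rabs_R0; lra.
- subst z. destruct (Hlx eps He) as [d [Hd Hd']].
  exists (Rmin d (y - x)); split; [apply Rmin_pos; lra|].
  intros u Hu. apply Rabs_def2 in Hu.
  assert (Rmin d (y - x) <= d) by apply Rmin_l. assert (Rmin d (y - x) <= y - x) by apply Rmin_r.
  rewrite (G1 x) by lra.
  destruct (Rle_dec u x).
  + rewrite G1 by lra. rewrite Rminus_diag, Rabs_R0; lra.
  + rewrite G2 by lra. apply Hd'. lra.
- destruct (Rtotal_order z y) as [Hz'|[Hz'|Hz']].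
  + set (K := Rabs ((f y - f z) / (y - z)) + Rabs ((f z - f x) / (z - x))).
    assert (HK : 0 <= K) by (unfold K; pose proof (Rabs_pos ((f y - f z) / (y - z))); pose proof (Rabs_pos ((f z - f x) / (z - x))); lra).
    exists (Rmin (Rmin (z - x) (y - z)) (eps / (K + 1))). split.
    { apply Rmin_pos; [apply Rmin_pos; lra| apply Rdiv_lt_0_compat; lra]. }
    intros u Hu.
    assert (Q1 : Rmin (Rmin (z - x) (y - z)) (eps / (K + 1)) <= Rmin (z - x) (y - z)) by apply Rmin_l.
    assert (Q2 : Rmin (Rmin (z - x) (y - z)) (eps / (K + 1)) <= eps / (K + 1)) by apply Rmin_r.
    assert (Q3 : Rmin (z - x) (y - z) <= z - x) by apply Rmin_l.
    assert (Q4 : Rmin (z - x) (y - z) <= y - z) by apply Rmin_r.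
    pose proof (Rabs_def2 _ _ Hu) as Hu'.
    rewrite G2, G2 by lra.
    eapply Rle_lt_trans; [apply (slope_bound x y f z u Hf); lra|]. fold K.
    apply Rle_lt_trans with (K * (eps / (K + 1))).
    { apply Rmult_le_compat_l; lra. }
    apply Rlt_le_trans with ((K + 1) * (eps / (K + 1))).
    { apply Rmult_lt_compat_r; [apply Rdiv_lt_0_compat|]; lra. }
    right; field; lra.
  + subst z. destruct (Hly eps He) as [d [Hd Hd']].
    exists (Rmin d (y - x)); split; [apply Rmin_pos; lra|].
    intros u Hu. apply Rabs_def2 in Hu.
    assert (Rmin d (y - x) <= d) by apply Rmin_l. assert (Rmin d (y - x) <= y - x) by apply Rmin_r.
    rewrite (G3 y) by lra.
    destruct (Rle_dec y u).
    * rewrite G3 by lra. rewrite Rminus_diag, Rabs_R0; lra.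
    * rewrite G2 by lra. apply Hd'. lra.
  + exists (z - y); split; [lra|]. intros u Hu. apply Rabs_def2 in Hu.
    rewrite G3, G3 by lra. rewrite Rminus_diag, Rabs_R0; lra.
Qed.



Definition PP (g : R -> R) (x : R) v := RInt g x v.
Definition QQ (g : R -> R) (x : R) v := RInt (PP g x) x v.

Lemma exg (g : R -> R) (Hg : forall z, continuous g z) a b : ex_RInt g a b.
Proof. apply (@ex_RInt_continuous R_CompleteNormedModule); intros; apply Hg. Qed.

Lemma dP (g : R -> R) (Hg : forall z, continuous g z) (x : R) v : is_derive (PP g x) v (g v).
Proof.
apply is_derive_RInt with (a := x); [|apply Hg].
apply filter_forall; intros b; apply (@RInt_correct R_CompleteNormedModule), exg, Hg.
Qed.

Lemma cP (g : R -> R) (Hg : forall z, continuous g z) (x : R) v : continuous (PP g x) v.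
Proof. apply (@ex_derive_continuous R_AbsRing R_NormedModule). eexists; apply dP, Hg. Qed.

Lemma dQ (g : R -> R) (Hg : forall z, continuous g z) (x : R) v : is_derive (QQ g x) v (PP g x v).
Proof.
apply is_derive_RInt with (a := x); [|apply cP, Hg].
apply filter_forall; intros b; apply (@RInt_correct R_CompleteNormedModule), (@ex_RInt_continuous R_CompleteNormedModule); intros; apply cP, Hg.
Qed.

Lemma DP (g : R -> R) (Hg : forall z, continuous g z) (x : R) v : Derive (PP g x) v = g v.
Proof. apply is_derive_unique, dP, Hg. Qed.
Lemma DQ (g : R -> R) (Hg : forall z, continuous g z) (x : R) v : Derive (QQ g x) v = PP g x v.
Proof. apply is_derive_unique, dQ, Hg. Qed.
Lemma eP (g : R -> R) (Hg : forall z, continuous g z) (x : R) v : ex_derive (PP g x) v.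
Proof. eexists; apply dP, Hg. Qed.
Lemma eQ (g : R -> R) (Hg : forall z, continuous g z) (x : R) v : ex_derive (QQ g x) v.
Proof. eexists; apply dQ, Hg. Qed.

Lemma wint (g : R -> R) (Hg : forall z, continuous g z) (x : R) a b p q : RInt (fun u => g u * (a * u + b)) p q =
  ((a * q + b) * PP g x q - a * QQ g x q) - ((a * p + b) * PP g x p - a * QQ g x p).
Proof.
apply is_RInt_unique.
apply (is_RInt_derive (fun u => (a * u + b) * PP g x u - a * QQ g x u)).
- intros u _. auto_derive.
  + split; [apply eP, Hg| split; [apply eQ, Hg|exact I]].
  + rewrite (DP g Hg x), (DQ g Hg x). ring.
- intros u _. apply (continuous_mult g (fun u => a * u + b)); [apply Hg|].
  apply (@ex_derive_continuous R_AbsRing R_NormedModule). auto_derive. exact I.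
Qed.


Lemma polyint c0 c1 a b p q : RInt (fun u => (c0 + c1 * u) * (a * u + b)) p q =
  (c0 * b * q + (c0 * a + c1 * b) * q ^ 2 / 2 + c1 * a * q ^ 3 / 3)
  - (c0 * b * p + (c0 * a + c1 * b) * p ^ 2 / 2 + c1 * a * p ^ 3 / 3).
Proof.
apply is_RInt_unique.
apply (is_RInt_derive (fun u => c0 * b * u + (c0 * a + c1 * b) * u ^ 2 / 2 + c1 * a * u ^ 3 / 3)).
- intros u _. auto_derive; [exact I| field].
- intros u _. apply (@ex_derive_continuous R_AbsRing R_NormedModule). auto_derive. exact I.
Qed.


Lemma inner_eq (g : R -> R) (Hg : forall z, continuous g z) x a b t :
  RInt (fun s => g ((s + t) / 2)) a b = 2 * PP g x ((b + t) / 2) - 2 * PP g x ((a + t) / 2).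
Proof.
apply is_RInt_unique.
apply (is_RInt_derive (fun s => 2 * PP g x ((s + t) / 2))).
- intros u _. auto_derive.
  + apply eP; exact Hg.
  + rewrite (DP g Hg x). unfold Rdiv; field.
- intros u _. apply (continuous_comp (fun s => (s + t) / 2) g); [|apply Hg].
  apply (@ex_derive_continuous R_AbsRing R_NormedModule). auto_derive. exact I.
Qed.

Lemma dmi (g : R -> R) (Hg : forall z, continuous g z) x y :
  double_mid_int x y g = 4 * (QQ g x y - 2 * QQ g x ((x + y) / 2) + QQ g x x).
Proof.
unfold double_mid_int.
rewrite (RInt_ext _ (fun t => 2 * PP g x ((y + t) / 2) - 2 * PP g x ((x + t) / 2))).
2:{ intros t _. apply inner_eq; exact Hg. }
rewrite (is_RInt_unique _ x y (minus ((fun t => 4 * QQ g x ((y + t) / 2) - 4 * QQ g x ((x + t) / 2)) y) ((fun t => 4 * QQ g x ((y + t) / 2) - 4 * QQ g x ((x + t) / 2)) x))).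
- unfold minus, plus, opp; simpl.
  replace ((y + y) / 2) with y by field. replace ((x + x) / 2) with x by field.
  replace ((y + x) / 2) with ((x + y) / 2) by field. ring.
- apply (@is_RInt_derive R_CompleteNormedModule (fun t => 4 * QQ g x ((y + t) / 2) - 4 * QQ g x ((x + t) / 2))).
  + intros u _. auto_derive.
    * repeat split; try (apply eQ; exact Hg).
    * rewrite !(DQ g Hg x). unfold Rdiv; field.
  + intros u _. apply (@ex_derive_continuous R_AbsRing R_NormedModule). auto_derive.
    repeat split; try (apply eP; exact Hg).
Qed.


Definition lin (f : R -> R) p q u := (f p * q - f q * p) / (q - p) + (f q - f p) / (q - p) * u.

Lemma chord_in x y f p q u : convex_on x y f -> x <= p -> p <= u -> u <= q -> q <= y -> p < q ->
  f u <= lin f p q u.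
Proof.
intros Hf H1 H2 H3 H4 H5. pose proof (cvx3 x y f p u q Hf H1 H2 H3 H4 H5).
unfold lin. apply (Rmult_le_reg_r (q - p)); [lra|].
replace (((f p * q - f q * p) / (q - p) + (f q - f p) / (q - p) * u) * (q - p)) with
  (f p * (q - u) + f q * (u - p)) by (field; lra). lra.
Qed.

Lemma chord_outl x y f p q u : convex_on x y f -> x <= u -> u <= p -> p < q -> q <= y ->
  lin f p q u <= f u.
Proof.
intros Hf H1 H2 H3 H4. pose proof (cvx3 x y f u p q Hf H1 H2 ltac:(lra) H4 ltac:(lra)).
unfold lin. apply (Rmult_le_reg_r (q - p)); [lra|].
replace (((f p * q - f q * p) / (q - p) + (f q - f p) / (q - p) * u) * (q - p)) with
  (f p * (q - u) + f q * (u - p)) by (field; lra). nra.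
Qed.

Lemma chord_outr x y f p q u : convex_on x y f -> x <= p -> p < q -> q <= u -> u <= y ->
  lin f p q u <= f u.
Proof.
intros Hf H1 H2 H3 H4. pose proof (cvx3 x y f p q u Hf H1 ltac:(lra) H3 H4 ltac:(lra)).
unfold lin. apply (Rmult_le_reg_r (q - p)); [lra|].
replace (((f p * q - f q * p) / (q - p) + (f q - f p) / (q - p) * u) * (q - p)) with
  (f p * (q - u) + f q * (u - p)) by (field; lra). nra.
Qed.

Lemma sgn_le a l w : (0 <= w -> a <= l) -> (w <= 0 -> l <= a) -> a * w <= l * w.
Proof. intros H1 H2. destruct (Rle_dec 0 w). specialize (H1 r); nra. assert (w <= 0) by lra. specialize (H2 H); nra. Qed.

Lemma half (g f : R -> R) (Hg : forall z, continuous g z) lo hi p q a b :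
  lo <= hi -> (forall u, lo < u < hi -> g u = f u) ->
  (forall u, lo < u < hi -> f u * (a * u + b) <= lin f p q u * (a * u + b)) ->
  RInt (fun u => g u * (a * u + b)) lo hi <=
  RInt (fun u => ((f p * q - f q * p) / (q - p) + (f q - f p) / (q - p) * u) * (a * u + b)) lo hi.
Proof.
intros Hlh Hgf Hpw. apply RInt_le; auto.
- apply (@ex_RInt_continuous R_CompleteNormedModule). intros z _.
  apply (continuous_mult g (fun u => a * u + b)); [apply Hg|].
  apply (@ex_derive_continuous R_AbsRing R_NormedModule). auto_derive. exact I.
- apply (@ex_RInt_continuous R_CompleteNormedModule). intros z _.
  apply (@ex_derive_continuous R_AbsRing R_NormedModule). auto_derive. exact I.
- intros u Hu. rewrite Hgf by exact Hu. apply Hpw, Hu.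
Qed.


Lemma pmge k t : 0 < k -> 0 <= k * t -> 0 <= t.
Proof. intros. nra. Qed.
Lemma pmle k t : 0 < k -> k * t <= 0 -> t <= 0.
Proof. intros. nra. Qed.

Theorem corollary1 (x y : R) (f : R -> R) :
  x < y -> convex_on x y f ->
  3 / (y - x) ^ 2 * double_mid_int x y f
    <= 2 / (y - x) * RInt f x y + f ((x + y) / 2)
  /\
  4 / (y - x) * RInt f x y
    <= 3 / (y - x) ^ 2 * double_mid_int x y f + (f x + f y) / 2.
Proof.
intros Hxy Hf. destruct (ext_cont x y f Hxy Hf) as [g [Hgf Hg]].
assert (Ei : RInt f x y = RInt (fun u => g u * (0 * u + 1)) x y).
{ apply RInt_ext; intros u Hu. rewrite Rmin_left, Rmax_right in Hu by lra. rewrite Hgf by lra. rewrite Rmult_0_l, Rplus_0_l, Rmult_1_r. reflexivity. }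
assert (Ed : double_mid_int x y f = double_mid_int x y g).
{ unfold double_mid_int. apply RInt_ext; intros t Ht. rewrite Rmin_left, Rmax_right in Ht by lra.
  apply RInt_ext; intros s Hs. rewrite Rmin_left, Rmax_right in Hs by lra. rewrite Hgf; auto; lra. }
rewrite Ed, (dmi g Hg), Ei, (wint g Hg x).
set (m := (x + y) / 2). set (L := y - x).
assert (HL : 0 < L) by (unfold L; lra).
assert (Hm : m = x + L / 2) by (unfold m, L; field).
assert (Hy : y = x + L) by (unfold L; ring).
assert (Hk : 0 < 12 / L ^ 2) by (apply Rdiv_lt_0_compat; [lra| apply pow_lt; lra]).
assert (Px : PP g x x = 0) by (unfold PP; apply (@RInt_point R_CompleteNormedModule)).
assert (Qx : QQ g x x = 0) by (unfold QQ; apply (@RInt_point R_CompleteNormedModule)).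
set (p1 := x + L / 6).
assert (Hp1 : p1 = x + L / 6) by reflexivity.
assert (H1 := half g f Hg x m p1 m (12 / L ^ 2) (- 12 * x / L ^ 2 - 2 / L) ltac:(lra)
  ltac:(intros u Hu; apply Hgf; lra)).
assert (E1 : forall u, 12 / L ^ 2 * u + (- 12 * x / L ^ 2 - 2 / L) = 12 / L ^ 2 * (u - p1))
  by (intros; unfold p1; field; lra).
specialize (H1 ltac:(intros u Hu; apply sgn_le; intro Hw; rewrite E1 in Hw;
  [apply pmge in Hw; [apply (chord_in x y f); [exact Hf|lra..]|lra] | apply pmle in Hw; [apply (chord_outl x y f); [exact Hf|lra..]|lra]])).
rewrite (wint g Hg x), polyint in H1.
set (q1 := y - L / 6).
assert (Hq1 : q1 = y - L / 6) by reflexivity.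
assert (H2 := half g f Hg m y m q1 (- 12 / L ^ 2) (12 * y / L ^ 2 - 2 / L) ltac:(lra)
  ltac:(intros u Hu; apply Hgf; lra)).
assert (E2 : forall u, - 12 / L ^ 2 * u + (12 * y / L ^ 2 - 2 / L) = 12 / L ^ 2 * (q1 - u))
  by (intros; unfold q1; field; lra).
specialize (H2 ltac:(intros u Hu; apply sgn_le; intro Hw; rewrite E2 in Hw;
  [apply pmge in Hw; [apply (chord_in x y f); [exact Hf|lra..]|lra] | apply pmle in Hw; [apply (chord_outr x y f); [exact Hf|lra..]|lra]])).
rewrite (wint g Hg x), polyint in H2.
set (q2 := x + L / 3).
assert (Hq2 : q2 = x + L / 3) by reflexivity.
assert (H3 := half g f Hg x m x q2 (- 12 / L ^ 2) (4 / L + 12 * x / L ^ 2) ltac:(lra)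
  ltac:(intros u Hu; apply Hgf; lra)).
assert (E3 : forall u, - 12 / L ^ 2 * u + (4 / L + 12 * x / L ^ 2) = 12 / L ^ 2 * (q2 - u))
  by (intros; unfold q2; field; lra).
specialize (H3 ltac:(intros u Hu; apply sgn_le; intro Hw; rewrite E3 in Hw;
  [apply pmge in Hw; [apply (chord_in x y f); [exact Hf|lra..]|lra] | apply pmle in Hw; [apply (chord_outr x y f); [exact Hf|lra..]|lra]])).
rewrite (wint g Hg x), polyint in H3.
set (p2 := y - L / 3).
assert (Hp2 : p2 = y - L / 3) by reflexivity.
assert (H4 := half g f Hg m y p2 y (12 / L ^ 2) (4 / L - 12 * y / L ^ 2) ltac:(lra)
  ltac:(intros u Hu; apply Hgf; lra)).
assert (E4 : forall u, 12 / L ^ 2 * u + (4 / L - 12 * y / L ^ 2) = 12 / L ^ 2 * (u - p2))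
  by (intros; unfold p2; field; lra).
specialize (H4 ltac:(intros u Hu; apply sgn_le; intro Hw; rewrite E4 in Hw;
  [apply pmge in Hw; [apply (chord_in x y f); [exact Hf|lra..]|lra] | apply pmle in Hw; [apply (chord_outl x y f); [exact Hf|lra..]|lra]])).
rewrite (wint g Hg x), polyint in H4.
rewrite Px, Qx in *.
clear E1 E2 E3 E4 Ei Ed.
clearbody m L p1 q1 q2 p2. subst p1 q1 q2 p2 m. subst y.
assert (HL2 : L ^ 2 <> 0) by (apply pow_nonzero; lra).
split.
- lazymatch type of H1 with ?l1 <= ?r1 => lazymatch type of H2 with ?l2 <= ?r2 =>
  lazymatch goal with |- ?A <= ?B => assert (Z : A - B = (l1 - r1) + (l2 - r2)) by (field; lra);
    set (d1 := l1 - r1) in *; set (d2 := l2 - r2) in *;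
    assert (d1 <= 0) by (unfold d1; lra); assert (d2 <= 0) by (unfold d2; lra);
    clearbody d1 d2; lra end end end.
- lazymatch type of H3 with ?l1 <= ?r1 => lazymatch type of H4 with ?l2 <= ?r2 =>
  lazymatch goal with |- ?A <= ?B => assert (Z : A - B = (l1 - r1) + (l2 - r2)) by (field; lra);
    set (d1 := l1 - r1) in *; set (d2 := l2 - r2) in *;
    assert (d1 <= 0) by (unfold d1; lra); assert (d2 <= 0) by (unfold d2; lra);
    clearbody d1 d2; lra end end end.
Qed.
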